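(* Any spreading basis $\mathcal{X}=(\mathbf{x}_n)_{n=1}^\infty$ of any quasi-Banach space $\mathbb{X}$ is semi-normalized and M-bounded; that is, $0<\inf_n\|\mathbf{x}_n\|\le\sup_n\|\mathbf{x}_n\|<\infty$ and $\sup_n\|\mathbf{x}_n\|\,\|\mathbf{x}_n^*\|<\infty$, where $(\mathbf{x}_n^* )$ are the coordinate functionals.
   Context: A complete minimal system is a sequence $\mathcal{X}=(\mathbf{x}_n)$ with dense linear span for which there exist (unique) $\mathbf{x}_n^*\in\mathbb{X}^*$ with $\mathbf{x}_n^*(\mathbf{x}_k)=\delta_{n,k}$, the coordinate functionals. For an injective $\psi\colon\mathbb{N}\to\mathbb{N}$, $\psi$ is a shift if $f\mapsto\sum_{n}\mathbf{x}_n^*(f)\,\mathbf{x}_{\psi(n)}$, $f\in\operatorname{span}(\mathcal{X})$, extends to a bounded operator $L_\psi\colon\mathbb{X}\to\mathbb{X}$. A spreading basis is a complete minimal system such that every increasing $\psi\colon\mathbb{N}\to\mathbb{N}$ is a shift and $L_\psi$ is an isomorphism onto its range. *)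

(* Defs.v *)
From mathcomp Require Import all_boot all_order all_algebra.
From mathcomp Require Import reals complex.
Set Implicit Arguments. Unset Strict Implicit. Unset Printing Implicit Defensive.
Import Order.TTheory GRing.Theory Num.Theory.
Local Open Scope ring_scope.

(* Scalars: a numFieldType K; the theorem is stated for K = R and K = R[i]
   with R : realType.  A quasi-norm takes values in the (real, nonnegative)
   part of K. *)
Section QB.
Variables (K : numFieldType) (X : lmodType K) (nrm : X -> K).

Definition quasi_norm : Prop :=
  [/\ forall x, 0 <= nrm x,
      forall x, nrm x = 0 -> x = 0,
      forall (a : K) x, nrm (a *: x) = `|a| * nrm x
    & exists kappa : K, forall x y, nrm (x + y) <= kappa * (nrm x + nrm y)].

Definition qcomplete : Prop :=
  forall u : nat -> X,
    (forall e : K, 0 < e -> exists N, forall m n, (N <= m)%N -> (N <= n)%N ->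
       nrm (u m - u n) < e) ->
    exists l : X, forall e : K, 0 < e -> exists N, forall n, (N <= n)%N ->
       nrm (u n - l) < e.

Definition quasi_Banach : Prop := quasi_norm /\ qcomplete.

Definition lin_functional (f : X -> K) : Prop :=
  forall (a : K) x y, f (a *: x + y) = a * f x + f y.
Definition lin_operator (L : X -> X) : Prop :=
  forall (a : K) x y, L (a *: x + y) = a *: L x + L y.

Definition bounded_functional (f : X -> K) : Prop :=
  exists C : K, forall x, `|f x| <= C * nrm x.
Definition bounded_operator (L : X -> X) : Prop :=
  exists C : K, forall x, nrm (L x) <= C * nrm x.

Definition in_span (x : nat -> X) (f : X) : Prop :=
  exists (N : nat) (c : nat -> K), f = \sum_(i < N) c i *: x i.

Definition complete_minimal (x : nat -> X) (xs : nat -> X -> K) : Prop :=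
  [/\ (forall f (e : K), 0 < e -> exists g, in_span x g /\ nrm (f - g) < e),
      (forall n, lin_functional (xs n) /\ bounded_functional (xs n))
    & (forall n k, xs n (x k) = if n == k then 1 else 0)].

Definition shift_operator (x : nat -> X) (xs : nat -> X -> K)
    (psi : nat -> nat) (L : X -> X) : Prop :=
  [/\ lin_operator L, bounded_operator L
    & forall (N : nat) (c : nat -> K),
        let f := \sum_(i < N) c i *: x i in
        L f = \sum_(i < N) xs i f *: x (psi i)].

Definition is_shift (x : nat -> X) (xs : nat -> X -> K) (psi : nat -> nat) :=
  injective psi /\ exists L, shift_operator x xs psi L.

(* spreading: every increasing psi is a shift, and L_psi is an isomorphism
   onto its range (i.e. bounded below) *)
Definition spreading_basis (x : nat -> X) (xs : nat -> X -> K) : Prop :=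
  complete_minimal x xs /\
  forall psi : nat -> nat, (forall m n, (m < n)%N -> (psi m < psi n)%N) ->
    exists L, shift_operator x xs psi L /\
      exists c : K, 0 < c /\ forall f, c * nrm f <= nrm (L f).

(* conclusion: semi-normalized and M-bounded.  sup_n ||x_n|| ||x_n^*|| < oo
   is written out as ||x_n|| |x_n^*(f)| <= C ||f|| for all n, f. *)
Definition seminormalized_Mbounded (x : nat -> X) (xs : nat -> X -> K) : Prop :=
  [/\ exists a : K, 0 < a /\ forall n, a <= nrm (x n),
      exists b : K, forall n, nrm (x n) <= b
    & exists C : K, forall n f, nrm (x n) * `|xs n f| <= C * nrm f].
End QB.

Definition corollary_for (K : numFieldType) : Prop :=
  forall (X : lmodType K) (nrm : X -> K) (x : nat -> X) (xs : nat -> X -> K),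
    quasi_Banach nrm -> spreading_basis nrm x xs ->
    seminormalized_Mbounded nrm x xs.

(* Main.v *)
Require Import Defs.
From mathcomp Require Import all_boot all_order all_algebra.
From mathcomp Require Import reals complex.
From mathcomp Require Import ring zify.
From Stdlib Require Import Classical ClassicalEpsilon.
Import Order.TTheory GRing.Theory Num.Theory.
Local Open Scope ring_scope.

Section Main.
Variables (K : numFieldType) (X : lmodType K) (nrm : X -> K) (x : nat -> X) (xs : nat -> X -> K).
Hypothesis arch : forall C : K, 0 < C -> exists n : nat, C <= n%:R.
Hypothesis qn : quasi_norm nrm.
Hypothesis sb : spreading_basis nrm x xs.

Definition incr (psi : nat -> nat) := forall m n, (m < n)%N -> (psi m < psi n)%N.

Lemma nrm_ge0 v : 0 <= nrm v. Proof. by have [H _ _ _] := qn; apply: H. Qed.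
Lemma nrm_eq0 v : nrm v = 0 -> v = 0. Proof. by have [_ H _ _] := qn; apply: H. Qed.
Lemma nrmZ a v : nrm (a *: v) = `|a| * nrm v. Proof. by have [_ _ H _] := qn; apply: H. Qed.
Lemma nrm0 : nrm 0 = 0.
Proof. by rewrite -(scale0r (0 : X)) nrmZ normr0 mul0r. Qed.
Lemma nrmN v : nrm (- v) = nrm v.
Proof. by rewrite -scaleN1r nrmZ normrN1 mul1r. Qed.

Lemma lf_props (f : X -> K) : lin_functional f ->
  [/\ f 0 = 0, forall u v, f (u + v) = f u + f v & forall a u, f (a *: u) = a * f u].
Proof.
move=> lf.
have f0 : f 0 = 0.
  have := lf 1 0 0; rewrite scale1r addr0 mul1r => H.
  by apply: (@addrI _ (f 0)); rewrite addr0 -H.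
split=> //.
- by move=> u v; rewrite -(scale1r u) lf mul1r scale1r.
- by move=> a u; rewrite -(addr0 (a *: u)) lf f0 addr0.
Qed.

Lemma lo_props (f : X -> X) : lin_operator f ->
  [/\ f 0 = 0, forall u v, f (u + v) = f u + f v & forall a u, f (a *: u) = a *: f u].
Proof.
move=> lf.
have f0 : f 0 = 0.
  have := lf 1 0 0; rewrite scale1r addr0 scale1r => H.
  by apply: (@addrI _ (f 0)); rewrite addr0 -H.
split=> //.
- by move=> u v; rewrite -(scale1r u) lf !scale1r.
- by move=> a u; rewrite -(addr0 (a *: u)) lf f0 addr0.
Qed.

Lemma lf_sum (f : X -> K) (y : nat -> X) (c : nat -> K) N : lin_functional f ->
  f (\sum_(i < N) c i *: y i) = \sum_(i < N) c i * f (y i).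
Proof.
move=> /lf_props [f0 fD fZ]; elim: N => [|N IH]; first by rewrite !big_ord0.
by rewrite !big_ord_recr /= fD fZ IH.
Qed.

Lemma lo_sum (f : X -> X) (y : nat -> X) (c : nat -> K) N : lin_operator f ->
  f (\sum_(i < N) c i *: y i) = \sum_(i < N) c i *: f (y i).
Proof.
move=> /lo_props [f0 fD fZ]; elim: N => [|N IH]; first by rewrite !big_ord0.
by rewrite !big_ord_recr /= fD fZ IH.
Qed.

Lemma delta_sum (y : nat -> X) k :
  \sum_(i < k.+1) (if (i : nat) == k then 1 else 0 : K) *: y i = y k.
Proof.
rewrite big_ord_recr /= eqxx scale1r big1 ?add0r // => i _.
by rewrite (ltn_eqF (ltn_ord i)) scale0r.
Qed.

Lemma shiftE psi L : shift_operator nrm x xs psi L -> forall k, L (x k) = x (psi k).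
Proof.
case=> _ _ H k; have := H k.+1 (fun i => if i == k then 1 else 0) => /=.
rewrite delta_sum => ->.
rewrite -[RHS](delta_sum (fun i => x (psi i))); apply: eq_bigr => i _.
by case: sb => -[_ _ ->] _.
Qed.


Lemma stepB psi : incr psi -> exists L, [/\ lin_operator L, forall k, L (x k) = x (psi k) &
  exists M, 0 < M /\ forall f, nrm (L f) <= M * nrm f /\ nrm f <= M * nrm (L f)].
Proof.
move=> Hpsi; case: sb => _ /(_ psi Hpsi) [L [hs [c [c0 Hc]]]].
have hs' := hs; case: hs' => lo [C HC] _.
exists L; split => //; first exact: shiftE hs.
exists (`|C| + c^-1); split; first by rewrite ltr_wpDl ?invr_gt0.
move=> f; split.
  apply: (le_trans (HC f)).
  have C0 : 0 <= C * nrm f by apply: le_trans (HC f); apply: nrm_ge0.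
  rewrite -(ger0_norm C0) normrM (ger0_norm (nrm_ge0 f)).
  by apply: ler_wpM2r; [apply: nrm_ge0 | rewrite lerDl invr_ge0 ltW].
have : nrm f <= c^-1 * nrm (L f) by rewrite ler_pdivlMl.
move/le_trans; apply; apply: ler_wpM2r; first exact: nrm_ge0.
by rewrite lerDr.
Qed.

Definition V (psi : nat -> nat) (c : nat -> K) N := \sum_(i < N) c i *: x (psi i).

Lemma LV L psi phi c N : lin_operator L -> (forall k, L (x k) = x (psi k)) ->
  L (V phi c N) = V (fun i => psi (phi i)) c N.
Proof. by move=> lo Lx; rewrite /V (@lo_sum L (fun i => x (phi i))) //; apply: eq_bigr => i _; rewrite Lx. Qed.

Definition goodat psi M N c :=
  nrm (V psi c N) <= M * nrm (V id c N) /\ nrm (V id c N) <= M * nrm (V psi c N).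

Lemma stepB' psi : incr psi -> exists M, 0 < M /\ forall N c, goodat psi M N c.
Proof.
move=> /stepB [L [lo Lx [M [M0 HM]]]]; exists M; split => // N c.
have := HM (V id c N); rewrite (@LV L psi id c N lo Lx) /=.
done.
Qed.


Lemma transfer s m M : incr s -> 0 < M ->
  (forall psi, incr psi -> (forall i, (i < m)%N -> psi i = s i) -> forall N c, goodat psi M N c) ->
  exists M', 0 < M' /\ forall phi, incr phi -> forall N c, goodat phi M' N c.
Proof.
move=> Hs M0 H.
have [Lt [lot Ltx [Mt [Mt0 HMt]]]] : exists L, [/\ lin_operator L, forall k, L (x k) = x ((fun k => k + s m)%N k) &
  exists M, 0 < M /\ forall f, nrm (L f) <= M * nrm f /\ nrm f <= M * nrm (L f)].
  by apply: stepB => i j ij; rewrite ltn_add2r.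
have [Lm [lom Lmx [Mm [Mm0 HMm]]]] : exists L, [/\ lin_operator L, forall k, L (x k) = x ((fun k => m + k)%N k) &
  exists M, 0 < M /\ forall f, nrm (L f) <= M * nrm f /\ nrm f <= M * nrm (L f)].
  by apply: stepB => i j ij; rewrite ltn_add2l.
exists (Mt * M * Mm); split; first by rewrite !mulr_gt0.
move=> phi Hphi N c.
pose psi k := if (k < m)%N then s k else (phi (k - m) + s m)%N.
have Hpsi : incr psi.
  move=> i j ij; rewrite /psi; case: (ltnP i m) => im; case: (ltnP j m) => jm.
  - by apply: Hs.
  - by apply: (leq_trans (Hs _ _ im)); rewrite leq_addl.
  - lia.
  - rewrite ltn_add2r; apply: Hphi; lia.
have Hagree : forall i, (i < m)%N -> psi i = s i by move=> i im; rewrite /psi im.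
pose c' k := if (k < m)%N then 0 else c (k - m)%N.
have Hsh : forall rho, V rho c' (m + N) = V (fun i => rho (m + i)%N) c N.
  move=> rho; rewrite /V big_split_ord /= big1 ?add0r.
    by apply: eq_bigr => i _ /=; rewrite /c' ltnNge leq_addr /= addKn.
  by move=> i _ /=; rewrite /c' ltn_ord scale0r.
have Epsi : Lt (V phi c N) = V (fun i => psi (m + i)%N) c N.
  rewrite (@LV Lt _ phi c N lot Ltx); apply: eq_bigr => i _.
  by rewrite /psi ltnNge leq_addr /= addKn.
have Eid : Lm (V id c N) = V (fun i => id (m + i)%N) c N by rewrite (@LV Lm _ id c N lom Lmx).
have [G1 G2] := H psi Hpsi Hagree (m + N)%N c'.
rewrite !Hsh -Epsi -Eid in G1 G2.
split.
  have e1 : nrm (V phi c N) <= Mt * (M * (Mm * nrm (V id c N))).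
    apply: (le_trans (proj2 (HMt (V phi c N)))); apply: ler_wpM2l; first exact: ltW.
    apply: (le_trans G1); apply: ler_wpM2l; first exact: ltW.
    exact: (proj1 (HMm _)).
  by rewrite !mulrA in e1.
have e1 : nrm (V id c N) <= Mm * (M * (Mt * nrm (V phi c N))).
  apply: (le_trans (proj2 (HMm (V id c N)))); apply: ler_wpM2l; first exact: ltW.
  apply: (le_trans G2); apply: ler_wpM2l; first exact: ltW.
  exact: (proj1 (HMt _)).
by apply: (le_trans e1); rewrite le_eqVlt; apply/orP; left; apply/eqP; ring.
Qed.


Lemma uniform : exists M, 0 < M /\ forall psi, incr psi -> forall N c, goodat psi M N c.
Proof.
apply: NNPP => NU.
have step : forall s m (j : nat), incr s -> exists psi N c,
    [/\ incr psi, (forall i, (i < m)%N -> psi i = s i) & ~ goodat psi (j.+1%:R) N c].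
  move=> s m j Hs; apply: NNPP => Hn; apply: NU.
  apply: (@transfer s m (j.+1%:R)) => //.
  move=> psi Hpsi Ha N c; apply: NNPP => Hb; apply: Hn; by exists psi, N, c.
have F : forall (p : (nat -> nat) * nat) (j : nat), {q : (nat -> nat) * nat |
   (p.2 < q.2)%N /\ (incr p.1 -> [/\ incr q.1, (forall i, (i < p.2)%N -> q.1 i = p.1 i) &
      exists N c, (N <= q.2)%N /\ ~ goodat q.1 (j.+1%:R) N c])}.
  move=> p j; apply: constructive_indefinite_description.
  case: (classic (incr p.1)) => Hi.
    have [psi [N [c [H1 H2 H3]]]] := step p.1 p.2 j Hi.
    exists (psi, (maxn p.2 N).+1); split => /=; first by rewrite ltnS leq_maxl.
    move=> _; split => //; exists N, c; split => //.
    by rewrite leqW // leq_maxr.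
  by exists (p.1, p.2.+1); split => //=.
pose st := fix st (j : nat) : (nat -> nat) * nat :=
  match j with 0 => ((fun i => i), 0%N) | S j' => sval (F (st j') j') end.
have stS : forall j, st j.+1 = sval (F (st j) j) by [].
have P1 : forall j, incr (st j).1 /\ (j <= (st j).2)%N.
  elim=> [|j [IH1 IH2]]; first by split => //=.
  rewrite stS; case: (svalP (F (st j) j)) => lt /(_ IH1) [h1 _ _]; split => //.
  exact: leq_ltn_trans IH2 lt.
have P2 : forall j d, ((st j).2 <= (st (j + d)).2)%N.
  move=> j; elim=> [|d IH]; first by rewrite addn0.
  rewrite addnS stS; case: (svalP (F (st (j+d)%N) (j+d))) => lt _.
  exact: leq_trans IH (ltnW lt).
have P3 : forall j d i, (i < (st j).2)%N -> (st (j + d)%N).1 i = (st j).1 i.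
  move=> j; elim=> [|d IH] i Hi; first by rewrite addn0.
  rewrite addnS stS; case: (svalP (F (st (j+d)%N) (j+d))) => _ /(_ (proj1 (P1 _))) [_ h2 _].
  rewrite h2 ?IH //; exact: leq_trans Hi (P2 j d).
pose lim i := (st i.+1).1 i.
have Plim : forall j i, (i < (st j).2)%N -> lim i = (st j).1 i.
  move=> j i Hi; rewrite /lim.
  have e1 := P3 j (maxn j i.+1 - j)%N i Hi; rewrite subnKC ?leq_maxl // in e1.
  have Hi' : (i < (st i.+1).2)%N by apply: (proj2 (P1 i.+1)).
  have e2 := P3 i.+1 (maxn j i.+1 - i.+1)%N i Hi'; rewrite subnKC ?leq_maxr // in e2.
  by rewrite -e2 e1.
have Hlim : incr lim.
  move=> a b ab; have hb : (b < (st b.+1).2)%N := proj2 (P1 b.+1).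
  have ha : (a < (st b.+1).2)%N by apply: ltn_trans ab hb.
  rewrite (Plim b.+1 a ha) (Plim b.+1 b hb).
  by apply: (proj1 (P1 b.+1)).
have [Ml [Ml0 HMl]] := @stepB' lim Hlim.
have [j Hj] := arch Ml Ml0.
case: (svalP (F (st j) j)) => _ /(_ (proj1 (P1 j))) [_ _ [N [c [HN Hbad]]]].
apply: Hbad; rewrite -stS.
have EV : V lim c N = V (st j.+1).1 c N.
  apply: eq_bigr => i _; rewrite (Plim j.+1) //; exact: leq_trans (ltn_ord i) HN.
have Hj' : Ml <= j.+1%:R by apply: le_trans Hj _; rewrite ler_nat.
rewrite /goodat -EV; have [g1 g2] := HMl N c; split.
  by apply: (le_trans g1); apply: ler_wpM2r => //; exact: nrm_ge0.
by apply: (le_trans g2); apply: ler_wpM2r => //; exact: nrm_ge0.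
Qed.


Lemma incr_tr n : incr (fun i => n + i)%N.
Proof. by move=> a b ab; rewrite ltn_add2l. Qed.

Lemma bio n k : xs n (x k) = if n == k then 1 else 0.
Proof. by case: sb => -[_ _ ->]. Qed.

Lemma lfn n : lin_functional (xs n).
Proof. by case: sb => -[_ H _] _; case: (H n). Qed.

Lemma x_neq0 k : x k != 0.
Proof.
apply/eqP => e; have := bio k k; rewrite eqxx e.
by have [-> _ _] := @lf_props _ (lfn k) => /eqP; rewrite eq_sym oner_eq0.
Qed.

Lemma nrm_gt0 v : v != 0 -> 0 < nrm v.
Proof.
move=> nz; rewrite lt_def nrm_ge0 andbT; apply/eqP => /nrm_eq0 e.
by rewrite e eqxx in nz.
Qed.

Lemma xsV n c N : xs n (V id c N) = if (n < N)%N then c n else 0.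
Proof.
rewrite /V (@lf_sum _ (fun i => x (id i)) c N (lfn n)).
under eq_bigr => i _ do rewrite bio.
case: ltnP => nN.
  rewrite (bigD1 (Ordinal nN)) //= eqxx mulr1 big1 ?addr0 // => i /eqP ne.
  case: eqP => [e|]; last by rewrite mulr0.
  by exfalso; apply: ne; apply: val_inj; rewrite /= e.
rewrite big1 // => i _; case: eqP => [e|]; last by rewrite mulr0.
by have := ltn_ord i; rewrite -e ltnNge nN.
Qed.


Lemma kap_ex : exists kap, 0 < kap /\ forall u v, nrm (u + v) <= kap * (nrm u + nrm v).
Proof.
have [_ _ _ [kap Hk]] := qn; exists kap; split => //.
have := Hk (x 0%N) 0; rewrite addr0 nrm0 addr0 => h.
have p := @nrm_gt0 _ (x_neq0 0).
rewrite -(pmulr_lgt0 _ p); exact: lt_le_trans p h.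
Qed.

Lemma incr_sk k : incr (fun i => if (i < k)%N then i else i.+1).
Proof. move=> a b ab /=; case: (ltnP a k) => ak; case: (ltnP b k) => bk; lia. Qed.

Lemma span_bound kap : 0 < kap -> (forall u v, nrm (u + v) <= kap * (nrm u + nrm v)) ->
  exists C0, 0 <= C0 /\ forall n N c, nrm (x n) * `|xs n (V id c N)| <= C0 * nrm (V id c N).
Proof.
move=> k0 Hk; have [M [M0 HU]] := uniform.
have x0p := @nrm_gt0 _ (x_neq0 0).
have Dp : 0 < nrm (x 0%N - x 1%N).
  apply: nrm_gt0; apply/eqP => /subr0_eq e; have := bio 0 1; rewrite -e bio /=.
  by move=> /eqP; rewrite oner_eq0.
set D := nrm (x 0%N - x 1%N).
set C0 := M * nrm (x 0%N) * D^-1 * (M * (kap * (M + M))).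
have C0p : 0 <= C0 by rewrite /C0 !mulr_ge0 ?addr_ge0 ?invr_ge0 ?ltW.
exists C0; split => // n N c; rewrite xsV; case: ltnP => nN; last first.
  by rewrite normr0 mulr0 mulr_ge0 ?nrm_ge0.
set f := V id c N.
have Hxn : nrm (x n) <= M * nrm (x 0%N).
  have := proj1 (HU _ (incr_tr n) 1%N (fun _ => 1)).
  by rewrite /V !big_ord1 /= !scale1r addn0; apply.
have HD : D <= M * nrm (x n - x n.+1).
  have := proj2 (HU _ (incr_tr n) 2%N (fun i => if i == 0%N then 1 else -1)).
  by rewrite /V !big_ord_recr !big_ord0 /= !add0r !scale1r !scaleN1r addn0 addn1; apply.
have Hdiff : V (fun i => if (i < n.+1)%N then i else i.+1) c N
           - V (fun i => if (i < n)%N then i else i.+1) c N = c n *: (x n - x n.+1).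
  rewrite /V -sumrB (bigD1 (Ordinal nN)) //= ltnn ltnSn scalerBr big1 ?addr0 //.
  move=> i /eqP ne; have ne' : (i : nat) != n.
    by apply/eqP => e; apply: ne; apply: val_inj.
  case: (ltngtP i n) => [lt|gt|e]; last by rewrite e eqxx in ne'.
    by rewrite ltnS (ltnW lt) subrr.
  by rewrite ltnS leqNgt gt /= subrr.
have Hs1 := proj1 (HU _ (incr_sk n.+1) N c).
have Hs0 := proj1 (HU _ (incr_sk n) N c).
have H1 : `|c n| * nrm (x n - x n.+1) <= kap * (M * nrm f + M * nrm f).
  rewrite -nrmZ -Hdiff; apply: le_trans (Hk _ _) _; rewrite nrmN.
  by apply: ler_wpM2l; [exact: ltW | exact: lerD].
have H2 : `|c n| * D <= M * (kap * (M * nrm f + M * nrm f)).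
  apply: (@le_trans _ _ (`|c n| * (M * nrm (x n - x n.+1)))).
    by apply: ler_wpM2l => //; exact: normr_ge0.
  by rewrite mulrCA; apply: ler_wpM2l; first exact: ltW.
apply: (@le_trans _ _ (M * nrm (x 0%N) * `|c n|)).
  by apply: ler_wpM2r => //; exact: normr_ge0.
have e : M * nrm (x 0%N) * `|c n| = M * nrm (x 0%N) * D^-1 * (`|c n| * D).
  by field; rewrite gt_eqF.
rewrite e; apply: (@le_trans _ _ (M * nrm (x 0%N) * D^-1 * (M * (kap * (M * nrm f + M * nrm f))))).
  by apply: ler_wpM2l => //; rewrite !mulr_ge0 ?invr_ge0 ?ltW.
by rewrite le_eqVlt; apply/orP; left; apply/eqP; rewrite /C0; ring.
Qed.


Lemma main : seminormalized_Mbounded nrm x xs.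
Proof.
have [M [M0 HU]] := uniform.
have x0p := @nrm_gt0 _ (x_neq0 0).
have Hxn : forall n, nrm (x n) <= M * nrm (x 0%N) /\ nrm (x 0%N) <= M * nrm (x n).
  move=> n; have := HU _ (incr_tr n) 1%N (fun _ => 1).
  by rewrite /goodat /V !big_ord1 /= !scale1r addn0.
have [kap [k0 Hk]] := kap_ex.
have [C0 [C0p HC0]] := @span_bound kap k0 Hk.
split.
- exists (nrm (x 0%N) / M); split; first by rewrite divr_gt0.
  by move=> n; rewrite mulrC ler_pdivrMl //; exact: (proj2 (Hxn n)).
- by exists (M * nrm (x 0%N)) => n; exact: (proj1 (Hxn n)).
- exists (C0 * kap) => n f.
  have [dense lfb _] : complete_minimal nrm x xs by case: sb.
  have [_ [Bn HB]] := lfb n.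
  have [_ fD _] := @lf_props _ (lfn n).
  apply/ler_addgt0Pr => e e0.
  set nx := nrm (x n).
  set Q := C0 * kap + nx * `|Bn| + 1.
  have Q0 : 0 < Q.
    rewrite /Q; apply: ltr_wpDl; last exact: ltr01.
    apply: addr_ge0; apply: mulr_ge0; first [done | exact: ltW | exact: nrm_ge0 | exact: normr_ge0].
  have e'0 : 0 < e / Q by rewrite divr_gt0.
  have [g [[N [c Hg]] Hfg]] := dense f (e / Q) e'0.
  have Hg' : g = V id c N by rewrite Hg.
  have Hxsf : xs n f = xs n g + xs n (f - g) by rewrite -fD addrC subrK.
  have Hb : `|xs n (f - g)| <= `|Bn| * (e / Q).
    have h := HB (f - g).
    have h0 : 0 <= Bn * nrm (f - g) := le_trans (normr_ge0 _) h.
    apply: (le_trans h); rewrite -(ger0_norm h0) normrM (ger0_norm (nrm_ge0 _)).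
    by apply: ler_wpM2l; [exact: normr_ge0 | exact: ltW].
  have Hng : nrm g <= kap * (nrm f + e / Q).
    have -> : g = f + (g - f) by rewrite addrC subrK.
    apply: le_trans (Hk _ _) _; apply: ler_wpM2l; first exact: ltW.
    by rewrite lerD2l -opprB nrmN ltW.
  have s1 : nx * `|xs n f| <= nx * `|xs n g| + nx * (`|Bn| * (e / Q)).
    rewrite -mulrDr; apply: ler_wpM2l; first exact: nrm_ge0.
    by rewrite Hxsf; apply: le_trans (ler_normD _ _) _; rewrite lerD2l.
  have s2 : nx * `|xs n g| <= C0 * (kap * (nrm f + e / Q)).
    apply: (@le_trans _ _ (C0 * nrm g)); first by rewrite Hg'; apply: HC0.
    by apply: ler_wpM2l.
  apply: (le_trans s1); apply: le_trans (lerD s2 (lexx _)) _.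
  have -> : C0 * (kap * (nrm f + e / Q)) + nx * (`|Bn| * (e / Q))
           = C0 * kap * nrm f + e / Q * (Q - 1) by rewrite /Q; ring.
  rewrite lerD2l; apply: (@le_trans _ _ (e / Q * Q)); last by rewrite divfK ?gt_eqF.
  apply: ler_wpM2l; first exact: ltW.
  by rewrite lerBlDr lerDl ler01.
Qed.

End Main.

Lemma arch_real (R : realType) : forall C : R, 0 < C -> exists n : nat, C <= n%:R.
Proof. by move=> C C0; exists (Num.Def.archi_bound C); apply/ltW/archi_boundP/ltW. Qed.

Lemma arch_cplx (R : realType) : forall C : R[i], 0 < C -> exists n : nat, C <= n%:R.
Proof.
move=> [a b]; rewrite ltcE /= => /andP [/eqP b0 a0].
exists (Num.Def.archi_bound a).
rewrite -(rmorph_nat (real_complex R)) lecE /= b0 eqxx /=.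
by apply/ltW/archi_boundP/ltW.
Qed.

Theorem corollary2p7 :
  forall R : realType, corollary_for R /\ corollary_for (R[i]).
Proof.
move=> R; split => X nrm x xs [qn _] sb.
  exact: main (@arch_real R) qn sb.
exact: main (@arch_cplx R) qn sb.
Qed.
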